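(* Let $I$ be a nonempty set, $1<p<\infty$, and for each $i\in I$ let $A_i:X_i\to Y_i$ be a bounded linear operator with $\sup_{i\in I}\|A_i\|<\infty$. Let $A:(\bigoplus_{i\in I}X_i)_{\ell_p(I)}\to(\bigoplus_{i\in I}Y_i)_{\ell_p(I)}$ be defined by $A|_{X_i}=A_i$. Then $\mathbf t_p(A)\le\sup_{i\in I}\max\{\mathbf t_p(A_i),\|A_i\|\}$. The analogous statement holds for $\mathbf t_\infty$ with the $\ell_p(I)$-direct sums replaced by $c_0(I)$-direct sums.
   Context: For an operator $B:X\to Y$ and $1<p<\infty$, $\mathbf t_p(B)$ is the infimum of those $C>0$ such that for every $y\in Y$, $\sigma>0$ and weakly null net $(x_\lambda)\subset\sigma B_X$, $\limsup_\lambda\|y+Bx_\lambda\|^p\le\|y\|^p+C^p\sigma^p$; $\mathbf t_\infty(B)$ is the infimum of those $C>0$ such that under the same quantifiers $\limsup_\lambda\|y+Bx_\lambda\|\le\max\{\|y\|,C\sigma\}$ (infimum of empty set $=\infty$). *)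

(* Defs.v *)
From Stdlib Require Import Reals Lra List.
Open Scope R_scope.

(* ---------- real powers, with the convention 0^q = 0 (q > 0) ---------- *)
Definition rpow (a q : R) : R := if Rle_dec a 0 then 0 else Rpower a q.

Lemma rpow_nonneg a q : 0 <= rpow a q.
Proof. unfold rpow, Rpower; destruct (Rle_dec a 0); [lra|]. left; apply exp_pos. Qed.

Lemma rpow_mono a b q : 0 <= q -> 0 <= a <= b -> rpow a q <= rpow b q.
Proof.
  intros Hq Hab; unfold rpow.
  destruct (Rle_dec a 0); destruct (Rle_dec b 0).
  - lra.
  - unfold Rpower; left; apply exp_pos.
  - lra.
  - apply Rle_Rpower_l; lra.
Qed.

Lemma rpow_mult a b q : 0 <= a -> 0 <= b -> rpow (a * b) q = rpow a q * rpow b q.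
Proof.
  intros Ha Hb; unfold rpow.
  destruct (Rle_dec a 0) as [Ha0|Ha0].
  - assert (a = 0) by lra; subst. rewrite Rmult_0_l.
    destruct (Rle_dec 0 0); [ring | lra].
  - destruct (Rle_dec b 0) as [Hb0|Hb0].
    + assert (b = 0) by lra; subst. rewrite Rmult_0_r.
      destruct (Rle_dec 0 0); [ring | lra].
    + destruct (Rle_dec (a * b) 0) as [H|H].
      * assert (0 < a * b) by (apply Rmult_lt_0_compat; lra). lra.
      * symmetry; apply Rpower_mult_distr; lra.
Qed.

Lemma rpow_max a b q : rpow (Rmax a b) q <= rpow a q + rpow b q.
Proof.
  unfold Rmax; destruct (Rle_dec a b);
  [pose proof (rpow_nonneg a q) | pose proof (rpow_nonneg b q)]; lra.
Qed.

Definition lsum {I : Type} (f : I -> R) (l : list I) : R :=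
  fold_right (fun i s => f i + s) 0 l.

Lemma lsum_le {I : Type} (f g : I -> R) l :
  (forall i, f i <= g i) -> lsum f l <= lsum g l.
Proof. intros H; induction l; simpl; [lra|]. specialize (H a); lra. Qed.

Lemma lsum_plus {I : Type} (f g : I -> R) l :
  lsum (fun i => f i + g i) l = lsum f l + lsum g l.
Proof. induction l; simpl; [ring|]. rewrite IHl; ring. Qed.

Lemma lsum_scal {I : Type} (c : R) (f : I -> R) l :
  lsum (fun i => c * f i) l = c * lsum f l.
Proof. induction l; simpl; [ring|]. rewrite IHl; ring. Qed.

Lemma lsum_nonneg {I : Type} (f : I -> R) l :
  (forall i, 0 <= f i) -> 0 <= lsum f l.
Proof. intros H; induction l; simpl; [lra|]. specialize (H a); lra. Qed.

Lemma lsum_in {I : Type} (f : I -> R) l i :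
  (forall j, 0 <= f j) -> In i l -> f i <= lsum f l.
Proof.
  intros H; induction l as [|a l IH]; simpl; [tauto|].
  intros [->|Hi].
  - pose proof (lsum_nonneg f l H); lra.
  - specialize (IH Hi); specialize (H a); lra.
Qed.

Record PreNormed := {
  pn_car :> Type;
  pn_add : pn_car -> pn_car -> pn_car;
  pn_scal : R -> pn_car -> pn_car;
  pn_norm : pn_car -> R }.

Arguments pn_add {_}.
Arguments pn_scal {_}.
Arguments pn_norm {_}.

Record NormedSpace := {
  ns_pre :> PreNormed;
  ns_zero : ns_pre;
  ns_opp : ns_pre -> ns_pre;
  ns_add_assoc : forall x y z : ns_pre, pn_add x (pn_add y z) = pn_add (pn_add x y) z;
  ns_add_comm : forall x y : ns_pre, pn_add x y = pn_add y x;
  ns_add_zero : forall x : ns_pre, pn_add x ns_zero = x;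
  ns_add_opp : forall x : ns_pre, pn_add x (ns_opp x) = ns_zero;
  ns_scal_assoc : forall a b (x : ns_pre), pn_scal a (pn_scal b x) = pn_scal (a * b) x;
  ns_scal_one : forall x : ns_pre, pn_scal 1 x = x;
  ns_scal_distr_l : forall a (x y : ns_pre), pn_scal a (pn_add x y) = pn_add (pn_scal a x) (pn_scal a y);
  ns_scal_distr_r : forall a b (x : ns_pre), pn_scal (a + b) x = pn_add (pn_scal a x) (pn_scal b x);
  ns_norm_nonneg : forall x : ns_pre, 0 <= pn_norm x;
  ns_norm_eq0 : forall x : ns_pre, pn_norm x = 0 -> x = ns_zero;
  ns_norm_scal : forall a (x : ns_pre), pn_norm (pn_scal a x) = Rabs a * pn_norm x;
  ns_norm_triangle : forall x y : ns_pre, pn_norm (pn_add x y) <= pn_norm x + pn_norm y;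
  ns_complete : forall u : nat -> ns_pre,
    (forall eps, 0 < eps -> exists N, forall m n, (N <= m)%nat -> (N <= n)%nat ->
        pn_norm (pn_add (u m) (ns_opp (u n))) < eps) ->
    exists l, forall eps, 0 < eps -> exists N, forall n, (N <= n)%nat ->
        pn_norm (pn_add (u n) (ns_opp l)) < eps }.

Record LinOp (X Y : NormedSpace) := {
  lo_fun :> X -> Y;
  lo_add : forall x y, lo_fun (pn_add x y) = pn_add (lo_fun x) (lo_fun y);
  lo_scal : forall a x, lo_fun (pn_scal a x) = pn_scal a (lo_fun x);
  lo_bdd : exists C, forall x, pn_norm (lo_fun x) <= C * pn_norm x }.

Definition opnorm_le (X Y : PreNormed) (B : X -> Y) (M : R) : Prop :=
  forall x : X, pn_norm x <= 1 -> pn_norm (B x) <= M.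

Record Directed := {
  dir_car :> Type;
  dir_le : dir_car -> dir_car -> Prop;
  dir_refl : forall a, dir_le a a;
  dir_trans : forall a b c, dir_le a b -> dir_le b c -> dir_le a c;
  dir_nonempty : inhabited dir_car;
  dir_up : forall a b, exists c, dir_le a c /\ dir_le b c }.

Definition is_bdd_lin_functional (X : PreNormed) (f : X -> R) : Prop :=
  (forall x y, f (pn_add x y) = f x + f y) /\
  (forall a x, f (pn_scal a x) = a * f x) /\
  (exists C, forall x, Rabs (f x) <= C * pn_norm x).

Definition weakly_null (X : PreNormed) (D : Directed) (x : D -> X) : Prop :=
  forall f : X -> R, is_bdd_lin_functional X f ->
    forall eps, 0 < eps -> exists l0 : D, forall l, dir_le D l0 l -> Rabs (f (x l)) < eps.

Definition limsup_le (D : Directed) (a : D -> R) (c : R) : Prop :=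
  forall eps, 0 < eps -> exists l0 : D, forall l, dir_le D l0 l -> a l <= c + eps.

Definition tp_admissible (p : R) (X Y : PreNormed) (B : X -> Y) (C : R) : Prop :=
  0 < C /\
  forall (y : Y) (sigma : R) (D : Directed) (x : D -> X),
    0 < sigma -> (forall l, pn_norm (x l) <= sigma) -> weakly_null X D x ->
    limsup_le D (fun l => rpow (pn_norm (pn_add y (B (x l)))) p)
                (rpow (pn_norm y) p + rpow C p * rpow sigma p).

Definition tinf_admissible (X Y : PreNormed) (B : X -> Y) (C : R) : Prop :=
  0 < C /\
  forall (y : Y) (sigma : R) (D : Directed) (x : D -> X),
    0 < sigma -> (forall l, pn_norm (x l) <= sigma) -> weakly_null X D x ->
    limsup_le D (fun l => pn_norm (pn_add y (B (x l))))
                (Rmax (pn_norm y) (C * sigma)).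

Arguments tp_admissible p {X Y} B C.
Arguments tinf_admissible {X Y} B C.
Arguments opnorm_le {X Y} B M.

(* t_p(B) <= M   (t_p(B) = inf of admissible C, inf of empty set = +oo) *)
Definition tp_le (p : R) (X Y : PreNormed) (B : X -> Y) (M : R) : Prop :=
  forall eps, 0 < eps -> exists C, tp_admissible p B C /\ C < M + eps.

Definition tinf_le (X Y : PreNormed) (B : X -> Y) (M : R) : Prop :=
  forall eps, 0 < eps -> exists C, tinf_admissible B C /\ C < M + eps.

Arguments tp_le p {X Y} B M.
Arguments weakly_null {X D} x.
Arguments limsup_le {D} a c.
Arguments tinf_le {X Y} B M.

Definition lp_mem {I : Type} (X : I -> NormedSpace) (p : R) (x : forall i, X i) : Prop :=
  exists M, forall l : list I, NoDup l ->
    lsum (fun i => rpow (pn_norm (x i)) p) l <= M.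

Definition lpT {I : Type} (X : I -> NormedSpace) (p : R) : Type :=
  { x : forall i, X i | lp_mem X p x }.

Lemma lp_mem_add {I : Type} (X : I -> NormedSpace) (p : R) (hp : 1 < p)
  (x y : forall i, X i) : lp_mem X p x -> lp_mem X p y ->
  lp_mem X p (fun i => pn_add (x i) (y i)).
Proof.
  intros [Mx Hx] [My Hy].
  exists (rpow 2 p * (Mx + My)); intros l Hl.
  eapply Rle_trans.
  - apply lsum_le with (g := fun i => rpow 2 p *
       (rpow (pn_norm (x i)) p + rpow (pn_norm (y i)) p)).
    intros i.
    pose proof (ns_norm_nonneg _ (x i)); pose proof (ns_norm_nonneg _ (y i)).
    pose proof (ns_norm_nonneg _ (pn_add (x i) (y i))).
    pose proof (ns_norm_triangle _ (x i) (y i)).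
    eapply Rle_trans.
    + apply rpow_mono with (b := 2 * Rmax (pn_norm (x i)) (pn_norm (y i))); [lra|].
      split; [lra|]. unfold Rmax; destruct (Rle_dec _ _); lra.
    + rewrite rpow_mult; [| lra | unfold Rmax; destruct (Rle_dec _ _); lra].
      apply Rmult_le_compat_l; [apply rpow_nonneg|apply rpow_max].
  - rewrite lsum_scal, lsum_plus.
    apply Rmult_le_compat_l; [apply rpow_nonneg|].
    specialize (Hx l Hl); specialize (Hy l Hl); lra.
Qed.

Lemma lp_mem_scal {I : Type} (X : I -> NormedSpace) (p : R) (hp : 1 < p)
  (a : R) (x : forall i, X i) : lp_mem X p x ->
  lp_mem X p (fun i => pn_scal a (x i)).
Proof.
  intros [Mx Hx].
  exists (rpow (Rabs a) p * Mx); intros l Hl.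
  eapply Rle_trans.
  - apply lsum_le with (g := fun i => rpow (Rabs a) p * rpow (pn_norm (x i)) p).
    intros i. rewrite ns_norm_scal, rpow_mult;
      [lra | apply Rabs_pos | apply ns_norm_nonneg].
  - rewrite lsum_scal. apply Rmult_le_compat_l; [apply rpow_nonneg|]. auto.
Qed.

Definition lp_add {I : Type} (X : I -> NormedSpace) (p : R) (hp : 1 < p)
  (x y : lpT X p) : lpT X p :=
  exist _ (fun i => pn_add (proj1_sig x i) (proj1_sig y i))
        (@lp_mem_add I X p hp _ _ (proj2_sig x) (proj2_sig y)).

Definition lp_scal {I : Type} (X : I -> NormedSpace) (p : R) (hp : 1 < p)
  (a : R) (x : lpT X p) : lpT X p :=
  exist _ (fun i => pn_scal a (proj1_sig x i)) (@lp_mem_scal I X p hp a _ (proj2_sig x)).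

Definition lp_partial {I : Type} (X : I -> NormedSpace) (p : R) (x : lpT X p) : R -> Prop :=
  fun r => exists l : list I, NoDup l /\
    r = lsum (fun i => rpow (pn_norm (proj1_sig x i)) p) l.

Lemma lp_partial_bound {I : Type} (X : I -> NormedSpace) (p : R) (x : lpT X p) :
  bound (lp_partial X p x).
Proof.
  destruct (proj2_sig x) as [M HM]. exists M. intros r [l [Hl ->]]. auto.
Qed.

Lemma lp_partial_ne {I : Type} (X : I -> NormedSpace) (p : R) (x : lpT X p) :
  exists r, lp_partial X p x r.
Proof. exists 0. exists nil. split; [constructor | reflexivity]. Qed.

(* ||x|| = (sup over finite F of sum_{i in F} ||x_i||^p)^(1/p) *)
Definition lp_norm {I : Type} (X : I -> NormedSpace) (p : R) (x : lpT X p) : R :=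
  rpow (proj1_sig (completeness _ (@lp_partial_bound I X p x) (@lp_partial_ne I X p x))) (1 / p).

Definition lp_sum {I : Type} (X : I -> NormedSpace) (p : R) (hp : 1 < p) : PreNormed :=
  {| pn_car := lpT X p; pn_add := @lp_add I X p hp; pn_scal := @lp_scal I X p hp;
     pn_norm := @lp_norm I X p |}.

Lemma lp_mem_op {I : Type} (X Y : I -> NormedSpace) (p : R) (hp : 1 < p)
  (A : forall i, LinOp (X i) (Y i))
  (HK : exists K, forall i (x : X i), pn_norm (A i x) <= K * pn_norm x)
  (x : forall i, X i) : lp_mem X p x -> lp_mem Y p (fun i => A i (x i)).
Proof.
  intros [Mx Hx]. destruct HK as [K HK].
  exists (rpow (Rabs K) p * Mx); intros l Hl.
  eapply Rle_trans.
  - apply lsum_le with (g := fun i => rpow (Rabs K) p * rpow (pn_norm (x i)) p).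
    intros i. rewrite <- rpow_mult; [| apply Rabs_pos | apply ns_norm_nonneg].
    apply rpow_mono; [lra|]. split; [apply ns_norm_nonneg|].
    eapply Rle_trans; [apply HK|]. apply Rmult_le_compat_r;
      [apply ns_norm_nonneg | apply RRle_abs].
  - rewrite lsum_scal. apply Rmult_le_compat_l; [apply rpow_nonneg|]. auto.
Qed.

Definition lp_op {I : Type} {X Y : I -> NormedSpace} {p : R} (hp : 1 < p)
  (A : forall i, LinOp (X i) (Y i))
  (HK : exists K, forall i (x : X i), pn_norm (A i x) <= K * pn_norm x)
  (x : lp_sum X p hp) : lp_sum Y p hp :=
  exist _ (fun i => A i (proj1_sig x i)) (@lp_mem_op I X Y p hp A HK _ (proj2_sig x)).

Definition c0_mem {I : Type} (X : I -> NormedSpace) (x : forall i, X i) : Prop :=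
  forall eps, 0 < eps -> exists l : list I,
    forall i, eps <= pn_norm (x i) -> In i l.

Definition c0T {I : Type} (X : I -> NormedSpace) : Type :=
  { x : forall i, X i | c0_mem X x }.

Lemma c0_mem_add {I : Type} (X : I -> NormedSpace) (x y : forall i, X i) :
  c0_mem X x -> c0_mem X y -> c0_mem X (fun i => pn_add (x i) (y i)).
Proof.
  intros Hx Hy eps He.
  destruct (Hx (eps / 2)) as [l1 H1]; [lra|].
  destruct (Hy (eps / 2)) as [l2 H2]; [lra|].
  exists (l1 ++ l2); intros i Hi. apply in_or_app.
  pose proof (ns_norm_triangle _ (x i) (y i)).
  destruct (Rle_dec (eps / 2) (pn_norm (x i))); [left; auto|].
  right; apply H2; lra.
Qed.

Lemma c0_mem_lip {I : Type} (X Y : I -> NormedSpace) (K : R)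
  (x : forall i, X i) (z : forall i, Y i) :
  (forall i, pn_norm (z i) <= K * pn_norm (x i)) -> c0_mem X x -> c0_mem Y z.
Proof.
  intros Hz Hx eps He.
  destruct (Hx (eps / (Rabs K + 1))) as [l Hl].
  { apply Rdiv_lt_0_compat; [lra|]. pose proof (Rabs_pos K); lra. }
  exists l; intros i Hi. apply Hl.
  pose proof (Rabs_pos K). pose proof (ns_norm_nonneg _ (x i)).
  pose proof (RRle_abs K). specialize (Hz i).
  apply Rmult_le_reg_r with (Rabs K + 1); [lra|].
  unfold Rdiv; rewrite Rmult_assoc, Rinv_l, Rmult_1_r; [|lra].
  assert (K * pn_norm (x i) <= Rabs K * pn_norm (x i))
    by (apply Rmult_le_compat_r; lra).
  nra.
Qed.

Lemma c0_mem_scal {I : Type} (X : I -> NormedSpace) (a : R) (x : forall i, X i) :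
  c0_mem X x -> c0_mem X (fun i => pn_scal a (x i)).
Proof.
  apply c0_mem_lip with (K := Rabs a). intros i. rewrite ns_norm_scal; lra.
Qed.

Definition c0_add {I : Type} (X : I -> NormedSpace) (x y : c0T X) : c0T X :=
  exist _ (fun i => pn_add (proj1_sig x i) (proj1_sig y i))
        (@c0_mem_add I X _ _ (proj2_sig x) (proj2_sig y)).

Definition c0_scal {I : Type} (X : I -> NormedSpace) (a : R) (x : c0T X) : c0T X :=
  exist _ (fun i => pn_scal a (proj1_sig x i)) (@c0_mem_scal I X a _ (proj2_sig x)).

Definition c0_vals {I : Type} (X : I -> NormedSpace) (x : c0T X) : R -> Prop :=
  fun r => r = 0 \/ exists i, r = pn_norm (proj1_sig x i).

Lemma c0_vals_bound {I : Type} (X : I -> NormedSpace) (x : c0T X) : bound (c0_vals X x).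
Proof.
  destruct (proj2_sig x 1 Rlt_0_1) as [l Hl].
  exists (1 + lsum (fun i => pn_norm (proj1_sig x i)) l).
  assert (H0 : 0 <= lsum (fun i => pn_norm (proj1_sig x i)) l)
    by (apply lsum_nonneg; intros; apply ns_norm_nonneg).
  intros r [->|[i ->]]; [lra|].
  destruct (Rle_dec 1 (pn_norm (proj1_sig x i))) as [H|H].
  - pose proof (lsum_in (fun i => pn_norm (proj1_sig x i)) l i
                  (fun j => ns_norm_nonneg _ _) (Hl i H)). simpl in *; lra.
  - lra.
Qed.

Lemma c0_vals_ne {I : Type} (X : I -> NormedSpace) (x : c0T X) : exists r, c0_vals X x r.
Proof. exists 0; left; reflexivity. Qed.

(* ||x|| = sup_i ||x_i||  (0 is included, harmless since norms are >= 0) *)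
Definition c0_norm {I : Type} (X : I -> NormedSpace) (x : c0T X) : R :=
  proj1_sig (completeness _ (@c0_vals_bound I X x) (@c0_vals_ne I X x)).

Definition c0_sum {I : Type} (X : I -> NormedSpace) : PreNormed :=
  {| pn_car := c0T X; pn_add := @c0_add I X; pn_scal := @c0_scal I X;
     pn_norm := @c0_norm I X |}.

Lemma c0_mem_op {I : Type} (X Y : I -> NormedSpace)
  (A : forall i, LinOp (X i) (Y i))
  (HK : exists K, forall i (x : X i), pn_norm (A i x) <= K * pn_norm x)
  (x : forall i, X i) : c0_mem X x -> c0_mem Y (fun i => A i (x i)).
Proof.
  intros Hx. destruct HK as [K HK]. apply (@c0_mem_lip I X Y K x); auto.
Qed.

Definition c0_op {I : Type} {X Y : I -> NormedSpace}
  (A : forall i, LinOp (X i) (Y i))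
  (HK : exists K, forall i (x : X i), pn_norm (A i x) <= K * pn_norm x)
  (x : c0_sum X) : c0_sum Y :=
  exist _ (fun i => A i (proj1_sig x i)) (@c0_mem_op I X Y A HK _ (proj2_sig x)).

(* Main.v *)
Require Import Defs.
From Stdlib Require Import Reals Lra Lia List Classical ClassicalEpsilon FunctionalExtensionality ZArith.
Open Scope R_scope.

Lemma rpow_pos_eq a q : 0 < a -> rpow a q = Rpower a q.
Proof. intros H; unfold rpow; destruct (Rle_dec a 0); [lra|auto]. Qed.

Lemma rpow_zero q : rpow 0 q = 0.
Proof. unfold rpow; destruct (Rle_dec 0 0); lra. Qed.

Lemma rpow_inv a p : 0 < p -> 0 <= a -> rpow (rpow a p) (1/p) = a.
Proof.
  intros Hp Ha. destruct (Req_dec a 0) as [->|Hn].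
  - rewrite !rpow_zero; auto.
  - assert (0 < a) by lra. rewrite (rpow_pos_eq a) by auto.
    rewrite rpow_pos_eq by (unfold Rpower; apply exp_pos).
    rewrite Rpower_mult. replace (p * (1/p)) with 1 by (field; lra).
    apply Rpower_1; auto.
Qed.

Lemma rpow_inv' a p : 0 < p -> 0 <= a -> rpow (rpow a (1/p)) p = a.
Proof.
  intros Hp Ha. destruct (Req_dec a 0) as [->|Hn].
  - rewrite !rpow_zero; auto.
  - assert (0 < a) by lra. rewrite (rpow_pos_eq a) by auto.
    rewrite rpow_pos_eq by (unfold Rpower; apply exp_pos).
    rewrite Rpower_mult. replace ((1/p) * p) with 1 by (field; lra).
    apply Rpower_1; auto.
Qed.

Lemma rpow_split a b p th : 0 <= p -> 0 <= a -> 0 <= b -> 0 < th ->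
  rpow (a + b) p <= rpow (1 + th) p * rpow b p + rpow (1 + 1/th) p * rpow a p.
Proof.
  intros Hp Ha Hb Ht.
  pose proof (rpow_nonneg (1+th) p); pose proof (rpow_nonneg b p).
  pose proof (rpow_nonneg (1+1/th) p); pose proof (rpow_nonneg a p).
  assert (0 < 1/th) by (apply Rdiv_lt_0_compat; lra).
  destruct (Rle_dec a (th * b)).
  - rewrite <- rpow_mult by lra.
    assert (rpow (a + b) p <= rpow ((1+th) * b) p) by (apply rpow_mono; nra).
    nra.
  - rewrite <- (rpow_mult (1 + 1/th)) by lra.
    assert (b <= 1/th * a).
    { apply Rmult_le_reg_l with th; [lra|]. field_simplify; lra. }
    assert (rpow (a + b) p <= rpow ((1+1/th) * a) p) by (apply rpow_mono; nra).
    nra.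
Qed.

Definition ev (D : Directed) (P : D -> Prop) := exists l0 : D, forall l, dir_le D l0 l -> P l.

Lemma ev_and (D : Directed) (P Q : D -> Prop) : ev D P -> ev D Q -> ev D (fun l => P l /\ Q l).
Proof.
  intros [a Ha] [b Hb]. destruct (dir_up D a b) as [c [Hac Hbc]].
  exists c; intros l Hl; split; [apply Ha | apply Hb]; eapply dir_trans; eauto.
Qed.

Lemma ev_list (D : Directed) {A : Type} (L : list A) (P : A -> D -> Prop) :
  (forall a, In a L -> ev D (P a)) -> ev D (fun l => forall a, In a L -> P a l).
Proof.
  induction L as [|a L IH]; intros H.
  - destruct (dir_nonempty D) as [d]. exists d; intros l _ a [].
  - destruct (ev_and D _ _ (H a (or_introl eq_refl)) (IH (fun b Hb => H b (or_intror Hb))))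
      as [l0 Hl0].
    exists l0; intros l Hl b Hb; destruct (Hl0 l Hl) as [H1 H2]; destruct Hb as [<-|Hb]; auto.
Qed.

Lemma M_nonneg {X Y : PreNormed} (B : X -> Y) p M : tp_le p B M -> 0 <= M.
Proof.
  intros H. destruct (Rle_dec 0 M); auto.
  destruct (H (- M)) as [C [[HC _] HCM]]; lra.
Qed.

Lemma M_nonneg' {X Y : PreNormed} (B : X -> Y) M : tinf_le B M -> 0 <= M.
Proof.
  intros H. destruct (Rle_dec 0 M); auto.
  destruct (H (- M)) as [C [[HC _] HCM]]; lra.
Qed.

Lemma op_bound {X Y : NormedSpace} (B : LinOp X Y) M : 0 <= M -> opnorm_le B M ->
  forall z, pn_norm (B z) <= M * pn_norm z.
Proof.
  intros HM H z.
  assert (Ht : forall t, pn_norm z < t -> pn_norm (B z) <= t * M).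
  { intros t Ht. pose proof (ns_norm_nonneg _ z).
    assert (Hz : z = pn_scal t (pn_scal (1/t) z)).
    { rewrite ns_scal_assoc. replace (t * (1/t)) with 1 by (field; lra).
      now rewrite ns_scal_one. }
    rewrite Hz, lo_scal, ns_norm_scal, Rabs_right by lra.
    apply Rmult_le_compat_l; [lra|]. apply H.
    rewrite ns_norm_scal, Rabs_right by (apply Rle_ge, Rlt_le, Rdiv_lt_0_compat; lra).
    apply Rmult_le_reg_l with t; [lra|]. field_simplify; lra. }
  pose proof (ns_norm_nonneg _ z). pose proof (ns_norm_nonneg _ (B z)).
  destruct (Rle_dec (pn_norm (B z)) (M * pn_norm z)) as [|Hn]; auto. exfalso.
  destruct (Req_dec M 0) as [->|HM0].
  - specialize (Ht (pn_norm z + 1)); lra.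
  - specialize (Ht ((pn_norm (B z) / M + pn_norm z) / 2)).
    assert (pn_norm z < pn_norm (B z) / M).
    { apply Rmult_lt_reg_r with M; [lra|]. field_simplify; lra. }
    assert (pn_norm (B z) <= (pn_norm (B z) / M + pn_norm z) / 2 * M) by (apply Ht; lra).
    assert ((pn_norm (B z) / M + pn_norm z) / 2 * M = (pn_norm (B z) + M * pn_norm z)/2)
      by (field; lra).
    lra.
Qed.

Section LP.
Context {I : Type} (X : I -> NormedSpace) (p : R).

Definition lpS (x : lpT X p) : R :=
  proj1_sig (completeness _ (@lp_partial_bound I X p x) (@lp_partial_ne I X p x)).

Definition pf (x : lpT X p) (i : I) : R := rpow (pn_norm (proj1_sig x i)) p.

Lemma lpS_ge x L : NoDup L -> lsum (pf x) L <= lpS x.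
Proof.
  intros HL. unfold lpS. pose proof (proj2_sig (completeness _ (@lp_partial_bound I X p x) (@lp_partial_ne I X p x))) as [Hs _].
  apply Hs. exists L; split; auto.
Qed.

Lemma lpS_le x B : (forall L, NoDup L -> lsum (pf x) L <= B) -> lpS x <= B.
Proof.
  intros H. unfold lpS. pose proof (proj2_sig (completeness _ (@lp_partial_bound I X p x) (@lp_partial_ne I X p x))) as [_ Hs].
  apply Hs. intros r [L [HL ->]]. apply H; auto.
Qed.

Lemma lpS_nonneg x : 0 <= lpS x.
Proof. pose proof (lpS_ge x nil (NoDup_nil _)). simpl in H; lra. Qed.

Lemma lpS_approx x d : 0 < d -> exists F, NoDup F /\ lpS x - d < lsum (pf x) F.
Proof.
  intros Hd. apply NNPP; intros Hn.
  assert (lpS x <= lpS x - d); [|lra].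
  apply lpS_le. intros L HL. apply Rnot_lt_le. intros Hlt. apply Hn. exists L; auto.
Qed.

Lemma lp_norm_pow x : 0 < p -> rpow (lp_norm X p x) p = lpS x.
Proof. intros Hp. unfold lp_norm. apply rpow_inv'; auto. apply lpS_nonneg. Qed.

Lemma lp_coord x i : 0 < p -> pn_norm (proj1_sig x i) <= lp_norm X p x.
Proof.
  intros Hp. pose proof (lpS_ge x (i :: nil) (NoDup_cons i (fun h : In i nil => h) (NoDup_nil _))).
  simpl in H. unfold lp_norm. fold (lpS x).
  rewrite <- (rpow_inv (pn_norm (proj1_sig x i)) p) by (auto; apply ns_norm_nonneg).
  apply rpow_mono. { apply Rlt_le, Rdiv_lt_0_compat; lra. }
  split; [apply rpow_nonneg|]. unfold pf in H; lra.
Qed.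

End LP.

Section Lists.
Context {I : Type}.

Definition inb (F : list I) (i : I) : bool :=
  if excluded_middle_informative (In i F) then true else false.

Lemma inb_true F i : inb F i = true <-> In i F.
Proof. unfold inb; destruct (excluded_middle_informative _); split; intros; auto; discriminate. Qed.

Definition chi (F : list I) (i : I) : R := if inb F i then 1 else 0.

Lemma lsum_chi_compl F f L :
  lsum (fun i => (1 - chi F i) * f i) L = lsum f (filter (fun i => negb (inb F i)) L).
Proof.
  induction L as [|a L IH]; simpl; auto. rewrite IH. unfold chi at 1.
  destruct (inb F a); simpl; ring.
Qed.

Lemma lsum_chi F L : lsum (chi F) L = INR (length (filter (inb F) L)).
Proof.
  induction L as [|a L IH]; simpl; auto. rewrite IH. unfold chi at 1.
  destruct (inb F a); simpl. 2: ring. destruct (length _); simpl; ring.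
Qed.

Lemma lsum_app (f : I -> R) L1 L2 : lsum f (L1 ++ L2) = lsum f L1 + lsum f L2.
Proof. induction L1; simpl; [ring|]. rewrite IHL1; ring. Qed.

Lemma chi_count F L : NoDup L -> NoDup F -> lsum (chi F) L <= INR (length F).
Proof.
  intros HL HF. rewrite lsum_chi. apply le_INR. apply NoDup_incl_length.
  - apply NoDup_filter; auto.
  - intros i Hi. apply filter_In in Hi. apply inb_true; tauto.
Qed.

Lemma tail_small (f : I -> R) S F L d :
  (forall L, NoDup L -> lsum f L <= S) -> NoDup F -> S - d < lsum f F -> NoDup L ->
  lsum (fun i => (1 - chi F i) * f i) L <= d.
Proof.
  intros HS HF HFd HL. rewrite lsum_chi_compl.
  assert (lsum f (filter (fun i => negb (inb F i)) L ++ F) <= S).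
  { apply HS. apply NoDup_app; auto. apply NoDup_filter; auto.
    intros a Ha Hb. apply filter_In in Ha. destruct Ha as [_ Ha].
    apply inb_true in Hb. rewrite Hb in Ha; discriminate. }
  rewrite lsum_app in H. lra.
Qed.

Lemma chi_01 F i : 0 <= chi F i <= 1.
Proof. unfold chi; destruct (inb F i); lra. Qed.

End Lists.

Lemma wn_proj (Z : PreNormed) (W : NormedSpace) (pi : Z -> W)
  (Hadd : forall a b, pi (pn_add a b) = pn_add (pi a) (pi b))
  (Hscal : forall r a, pi (pn_scal r a) = pn_scal r (pi a))
  (Hn : forall a, pn_norm (pi a) <= pn_norm a)
  (D : Directed) (x : D -> Z) (c : D -> R) :
  (forall l, Rabs (c l) <= 1) -> weakly_null x ->
  weakly_null (fun l => pn_scal (c l) (pi (x l))).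
Proof.
  intros Hc Hw g [Hga [Hgs [C HC]]] eps He.
  destruct (Hw (fun z => g (pi z))) with (eps := eps) as [l0 Hl0]; auto.
  - split; [|split].
    + intros a b; rewrite Hadd; auto.
    + intros r a; rewrite Hscal; auto.
    + exists (Rabs C); intros a. eapply Rle_trans; [apply HC|].
      pose proof (ns_norm_nonneg _ (pi a)). pose proof (Rle_abs C).
      pose proof (Rabs_pos C).
      apply Rle_trans with (Rabs C * pn_norm (pi a)); [nra|].
      apply Rmult_le_compat_l; auto.
  - exists l0; intros l Hl. rewrite Hgs, Rabs_mult.
    specialize (Hl0 l Hl). specialize (Hc l). pose proof (Rabs_pos (c l)).
    pose proof (Rabs_pos (g (pi (x l)))). nra.
Qed.

Lemma wn_proj1 (Z : PreNormed) (W : NormedSpace) (pi : Z -> W)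
  (Hadd : forall a b, pi (pn_add a b) = pn_add (pi a) (pi b))
  (Hscal : forall r a, pi (pn_scal r a) = pn_scal r (pi a))
  (Hn : forall a, pn_norm (pi a) <= pn_norm a)
  (D : Directed) (x : D -> Z) :
  weakly_null x -> weakly_null (fun l => pi (x l)).
Proof.
  intros Hw. pose proof (wn_proj Z W pi Hadd Hscal Hn D x (fun _ => 1)) as H.
  replace (fun l => pi (x l)) with (fun l => pn_scal 1 (pi (x l))).
  - apply H; auto. intros; rewrite Rabs_R1; lra.
  - apply functional_extensionality; intros; apply ns_scal_one.
Qed.

Section C0.
Context {I : Type} (X : I -> NormedSpace).

Lemma c0_coord (x : c0T X) i : pn_norm (proj1_sig x i) <= c0_norm X x.
Proof.
  unfold c0_norm.
  pose proof (proj2_sig (completeness _ (@c0_vals_bound I X x) (@c0_vals_ne I X x))) as [Hs _].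
  apply Hs. right; exists i; auto.
Qed.

Lemma c0_le (x : c0T X) B : 0 <= B -> (forall i, pn_norm (proj1_sig x i) <= B) -> c0_norm X x <= B.
Proof.
  intros HB H. unfold c0_norm.
  pose proof (proj2_sig (completeness _ (@c0_vals_bound I X x) (@c0_vals_ne I X x))) as [_ Hs].
  apply Hs. intros r [->|[i ->]]; auto.
Qed.
End C0.

Lemma c0_main {I : Type} (X Y : I -> NormedSpace) (A : forall i, LinOp (X i) (Y i))
  (Hinh : inhabited I)
  (HK : exists K, forall i (x : X i), pn_norm (A i x) <= K * pn_norm x) (M : R) :
  (forall i, tinf_le (A i) M /\ opnorm_le (A i) M) -> tinf_le (c0_op A HK) M.
Proof.
  intros H eps He.
  assert (HM : 0 <= M) by (destruct Hinh as [i0]; apply (M_nonneg' (A i0)); apply H).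
  exists (M + eps/2). split; [|lra]. split; [lra|].
  intros y sigma D x Hs Hx Hw e0 He0.
  destruct (proj2_sig y e0 He0) as [F HF].
  set (R0 := Rmax (pn_norm y) ((M + eps/2) * sigma)).
  assert (Hev : ev D (fun l => forall i, In i F ->
     pn_norm (pn_add (proj1_sig y i) (A i (proj1_sig (x l) i))) <= R0 + e0)).
  { apply ev_list. intros i _.
    destruct (H i) as [Ht _]. destruct (Ht (eps/2)) as [Ci [[HCi Hadm] HCiM]]; [lra|].
    destruct (Hadm (proj1_sig y i) sigma D (fun l => proj1_sig (x l) i)) with (eps := e0)
      as [l0 Hl0]; auto.
    - intros l. eapply Rle_trans; [apply (c0_coord X (x l) i)|]. apply Hx.
    - apply (wn_proj1 (c0_sum X) (X i) (fun z => proj1_sig z i)); auto.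
      intros a; apply c0_coord.
    - exists l0; intros l Hl. eapply Rle_trans; [apply Hl0; auto|].
      apply Rplus_le_compat_r. unfold R0.
      pose proof (c0_coord Y y i).
      apply Rmax_lub.
      + eapply Rle_trans; [apply H0|]. apply Rmax_l.
      + eapply Rle_trans; [|apply Rmax_r]. apply Rmult_le_compat_r; lra. }
  destruct Hev as [l0 Hl0]. exists l0; intros l Hl.
  apply c0_le.
  { unfold R0. pose proof (Rmax_r (pn_norm y) ((M + eps / 2) * sigma)).
    assert (0 <= (M + eps / 2) * sigma) by (apply Rmult_le_pos; lra). lra. }
  intros i. simpl.
  destruct (classic (In i F)) as [Hi|Hi]; [apply Hl0; auto|].
  assert (Hyi : pn_norm (proj1_sig y i) < e0).
  { apply Rnot_le_lt; intros Hc; apply Hi; apply HF; auto. }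
  destruct (H i) as [_ Ho].
  pose proof (op_bound (A i) M HM Ho (proj1_sig (x l) i)).
  pose proof (ns_norm_triangle _ (proj1_sig y i) (A i (proj1_sig (x l) i))).
  pose proof (c0_coord X (x l) i). pose proof (Hx l).
  assert (M * pn_norm (proj1_sig (x l) i) <= (M + eps/2) * sigma).
  { apply Rle_trans with (M * sigma); [apply Rmult_le_compat_l; [lra|]; simpl in *; lra|].
    apply Rmult_le_compat_r; lra. }
  pose proof (Rmax_r (pn_norm y) ((M + eps / 2) * sigma)). unfold R0. lra.
Qed.

Lemma grid r eta sigma : 0 <= r <= sigma -> 0 < eta ->
  exists k, (k <= Z.to_nat (up (sigma/eta)))%nat /\ r <= (INR k + 1) * eta <= r + eta.
Proof.
  intros Hr He. destruct (archimed (r/eta)) as [H1 H2].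
  destruct (archimed (sigma/eta)) as [H3 H4].
  set (z := up (r/eta)) in *. set (w := up (sigma/eta)) in *.
  assert (Hrs : r/eta <= sigma/eta) by (unfold Rdiv; apply Rmult_le_compat_r; [apply Rlt_le, Rinv_0_lt_compat|]; lra).
  assert (Hr0 : 0 <= r/eta) by (apply Rle_mult_inv_pos; lra).
  assert (Hz : (0 < z)%Z) by (apply lt_IZR; simpl; lra).
  assert (Hzw : (z - 1 < w)%Z) by (apply lt_IZR; rewrite minus_IZR; simpl; lra).
  exists (Z.to_nat (z - 1)). split; [lia|].
  rewrite INR_IZR_INZ, Z2Nat.id by lia. rewrite minus_IZR. simpl.
  replace (IZR z - 1 + 1) with (IZR z) by ring.
  split.
  - apply Rmult_le_reg_r with (/ eta); [apply Rinv_0_lt_compat; lra|].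
    rewrite Rmult_assoc, Rinv_r, Rmult_1_r by lra. unfold Rdiv in *; lra.
  - apply Rmult_le_reg_r with (/ eta); [apply Rinv_0_lt_compat; lra|].
    rewrite Rmult_assoc, Rinv_r, Rmult_1_r by lra.
    rewrite Rmult_plus_distr_r, Rinv_r by lra. unfold Rdiv in *; lra.
Qed.

Lemma lsum4 {I : Type} (a b c d : I -> R) K Q E L :
  lsum (fun i => a i + K * b i + Q * c i + E * d i) L =
  lsum a L + K * lsum b L + Q * lsum c L + E * lsum d L.
Proof. induction L; simpl; [ring|]. rewrite IHL; ring. Qed.

Lemma lp_main {I : Type} (X Y : I -> NormedSpace) (A : forall i, LinOp (X i) (Y i))
  (Hinh : inhabited I)
  (HK : exists K, forall i (x : X i), pn_norm (A i x) <= K * pn_norm x)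
  (p : R) (hp : 1 < p) (M : R) :
  (forall i, tp_le p (A i) M /\ opnorm_le (A i) M) -> tp_le p (lp_op hp A HK) M.
Proof.
  intros H eps He.
  assert (HM : 0 <= M) by (destruct Hinh as [i0]; apply (M_nonneg (A i0) p); apply H).
  assert (Hp0 : 0 <= p) by lra. assert (Hp : 0 < p) by lra.
  set (C := M + eps/2). set (C' := M + eps/4).
  exists C. split; [|unfold C; lra]. split; [unfold C; lra|].
  intros y sigma D x Hs Hx Hw e0 He0.
  set (th := eps / (4 * M + eps)).
  assert (Hth : 0 < th) by (apply Rdiv_lt_0_compat; lra).
  assert (HthC : (1 + th) * C' = C) by (unfold th, C, C'; field; lra).
  set (K := rpow (1 + 1/th) p). set (Q := rpow C p). set (T := rpow (1 + th) p).
  assert (HK0 : 0 <= K) by apply rpow_nonneg.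
  set (Sy := lpS Y p y).
  set (dl := e0 / (3 * (K + 1))).
  assert (Hdl : 0 < dl) by (apply Rdiv_lt_0_compat; lra).
  destruct (lpS_approx Y p y dl Hdl) as [F [HF HFd]].
  set (n := INR (length F)). assert (Hn : 0 <= n) by apply pos_INR.
  set (e1 := e0 / (3 * (n + 1))).
  assert (He1 : 0 < e1) by (apply Rdiv_lt_0_compat; lra).
  set (Cp := rpow C' p). assert (HCp : 0 <= Cp) by apply rpow_nonneg.
  set (rho := e0 / (3 * (n + 1) * (Cp * K + 1))).
  assert (Hrho : 0 < rho).
  { apply Rdiv_lt_0_compat; [lra|]. apply Rmult_lt_0_compat; [lra|]. nra. }
  set (eta := rpow rho (1/p)).
  assert (Heta : 0 < eta).
  { unfold eta. rewrite rpow_pos_eq by auto. unfold Rpower; apply exp_pos. }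
  assert (Hetap : rpow eta p = rho) by (unfold eta; apply rpow_inv'; lra).
  set (G := Z.to_nat (up (sigma/eta))).
  set (E := Cp * K * rho + e1).
  assert (HnE : n * E <= 2 * e0 / 3).
  { unfold E, rho, e1.
    assert (Cp * K * (e0 / (3 * (n + 1) * (Cp * K + 1))) <= e0 / (3 * (n+1))).
    { unfold Rdiv. rewrite Rinv_mult. rewrite <- Rmult_assoc.
      assert (0 < / (3 * (n + 1))) by (apply Rinv_0_lt_compat; lra).
      assert (0 < / (Cp * K + 1)) by (apply Rinv_0_lt_compat; nra).
      assert (Cp * K * / (Cp * K + 1) <= 1).
      { apply Rmult_le_reg_r with (Cp * K + 1); [nra|].
        rewrite Rmult_assoc, Rinv_l by nra. nra. }
      assert (0 <= e0 * / (3 * (n + 1))) by nra.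
      replace (Cp * K * (e0 * / (3 * (n + 1))) * / (Cp * K + 1)) with
        ((Cp * K * / (Cp * K + 1)) * (e0 * / (3 * (n + 1)))) by ring.
      nra. }
    assert (n * (e0 / (3 * (n + 1))) <= e0 / 3).
    { unfold Rdiv. apply Rmult_le_reg_r with (3 * (n + 1)); [lra|].
      replace (n * (e0 * / (3 * (n + 1))) * (3 * (n + 1))) with (n * e0) by (field; lra).
      replace (e0 * / 3 * (3 * (n + 1))) with (e0 * (n + 1)) by field. nra. }
    assert (n * (Cp * K * (e0 / (3 * (n + 1) * (Cp * K + 1)))) <= n * (e0 / (3 * (n+1))))
      by (apply Rmult_le_compat_l; auto).
    nra. }
  assert (Hev : ev D (fun l => forall i, In i F -> forall k, In k (seq 0 (S G)) ->
      pn_norm (proj1_sig (x l) i) <= (INR k + 1) * eta ->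
      rpow (pn_norm (pn_add (proj1_sig y i) (A i (proj1_sig (x l) i)))) p <=
      rpow (pn_norm (proj1_sig y i)) p + Cp * rpow ((INR k + 1) * eta) p + e1)).
  { apply ev_list. intros i _. apply ev_list. intros k _.
    set (t := (INR k + 1) * eta).
    assert (Ht : 0 < t) by (unfold t; pose proof (pos_INR k); nra).
    destruct (H i) as [Htp _]. destruct (Htp (eps/4)) as [Ci [[HCi Hadm] HCiM]]; [lra|].
    set (c := fun l => if Rle_dec (pn_norm (proj1_sig (x l) i)) t then 1 else 0).
    destruct (Hadm (proj1_sig y i) t D (fun l => pn_scal (c l) (proj1_sig (x l) i)))
      with (eps := e1) as [l0 Hl0]; auto.
    - intros l. rewrite ns_norm_scal. unfold c.
      destruct (Rle_dec _ _); [rewrite Rabs_R1, Rmult_1_l; exact r|rewrite Rabs_R0, Rmult_0_l; lra].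
    - apply (wn_proj (lp_sum X p hp) (X i) (fun z => proj1_sig z i)); auto.
      + intros a. apply lp_coord; auto.
      + intros l. unfold c. destruct (Rle_dec _ _); [rewrite Rabs_R1|rewrite Rabs_R0]; lra.
    - exists l0. intros l Hl Hxl. specialize (Hl0 l Hl). simpl in Hl0.
      unfold c in Hl0. destruct (Rle_dec _ _) as [_|Hc]; [|fold t in Hxl; contradiction].
      rewrite ns_scal_one in Hl0. eapply Rle_trans; [apply Hl0|].
      apply Rplus_le_compat_r, Rplus_le_compat_l. apply Rmult_le_compat_r; [apply rpow_nonneg|].
      apply rpow_mono; unfold C'; lra. }
  destruct Hev as [l0 Hl0]. exists l0. intros l Hl.
  set (z := pn_add y (lp_op hp A HK (x l))).
  change (rpow (lp_norm Y p z) p <= rpow (lp_norm Y p y) p + rpow C p * rpow sigma p + e0).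
  rewrite !lp_norm_pow by auto. fold Sy. fold Q.
  assert (Hxs : lpS X p (x l) <= rpow sigma p).
  { rewrite <- lp_norm_pow by auto. apply rpow_mono; auto. split; [apply rpow_nonneg|].
    apply Hx. }
  assert (Hpt : forall i, pf Y p z i <= chi F i * pf Y p y i + K * ((1 - chi F i) * pf Y p y i)
                 + Q * pf X p (x l) i + E * chi F i).
  { intros i. unfold pf. simpl proj1_sig.
    set (r := pn_norm (proj1_sig (x l) i)). set (a := pn_norm (proj1_sig y i)).
    assert (Hr0 : 0 <= r) by apply ns_norm_nonneg.
    assert (Ha0 : 0 <= a) by apply ns_norm_nonneg.
    assert (Hrs : r <= sigma) by (eapply Rle_trans; [apply (lp_coord X p (x l) i Hp)|]; apply Hx).
    destruct (classic (In i F)) as [Hi|Hi].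
    - assert (Hchi : chi F i = 1) by (unfold chi; apply inb_true in Hi; rewrite Hi; auto).
      rewrite Hchi.
      destruct (grid r eta sigma (conj Hr0 Hrs) Heta) as [k [HkG [Hk1 Hk2]]].
      assert (Hk : In k (seq 0 (S G))) by (apply in_seq; unfold G; lia).
      specialize (Hl0 l Hl i Hi k Hk Hk1). fold a in Hl0.
      assert (H1 : rpow ((INR k + 1) * eta) p <= T * rpow r p + K * rpow eta p).
      { eapply Rle_trans; [apply rpow_mono with (b := eta + r); [lra | split; [|lra]]|].
        - pose proof (pos_INR k); nra.
        - apply rpow_split; lra. }
      assert (HCT : Cp * T = Q).
      { unfold Cp, T, Q. rewrite <- rpow_mult by (unfold C'; lra). f_equal. rewrite <- HthC. ring. }
      rewrite Hetap in H1.
      assert (Cp * rpow ((INR k + 1) * eta) p <= Q * rpow r p + Cp * K * rho).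
      { rewrite <- HCT. 
        assert (Cp * rpow ((INR k + 1) * eta) p <= Cp * (T * rpow r p + K * rho))
          by (apply Rmult_le_compat_l; auto). nra. }
      unfold E. nra.
    - assert (Hchi : chi F i = 0).
      { unfold chi. destruct (inb F i) eqn:Hb; auto. apply inb_true in Hb; contradiction. }
      rewrite Hchi.
      destruct (H i) as [_ Ho].
      pose proof (op_bound (A i) M HM Ho (proj1_sig (x l) i)) as Hop. fold r in Hop.
      pose proof (ns_norm_triangle _ (proj1_sig y i) (A i (proj1_sig (x l) i))) as Htri.
      fold a in Htri.
      assert (H1 : rpow (pn_norm (pn_add (proj1_sig y i) (A i (proj1_sig (x l) i)))) p
                   <= rpow (a + M * r) p).
      { apply rpow_mono; auto. split; [apply ns_norm_nonneg|]. lra. }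
      assert (H2 : rpow (a + M * r) p <= T * rpow (M * r) p + K * rpow a p)
        by (apply rpow_split; auto; nra).
      assert (H3 : T * rpow (M * r) p <= Q * rpow r p).
      { unfold T, Q. rewrite rpow_mult by lra. rewrite <- Rmult_assoc.
        rewrite <- rpow_mult by lra. apply Rmult_le_compat_r; [apply rpow_nonneg|].
        apply rpow_mono; auto. split; [nra|]. rewrite <- HthC. unfold C'. nra. }
      nra. }
  assert (HL : lpS Y p z <= Sy + K * dl + Q * rpow sigma p + n * E).
  { apply lpS_le. intros L HLd.
    eapply Rle_trans; [apply lsum_le; apply Hpt|]. rewrite lsum4.
    assert (lsum (fun i => chi F i * pf Y p y i) L <= Sy).
    { eapply Rle_trans; [|apply (lpS_ge Y p y L HLd)]. apply lsum_le. intros i.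
      pose proof (chi_01 F i). assert (0 <= pf Y p y i) by apply rpow_nonneg. nra. }
    assert (lsum (fun i => (1 - chi F i) * pf Y p y i) L <= dl).
    { apply (tail_small _ Sy F L dl); auto. intros L' HL'. apply lpS_ge; auto. }
    assert (lsum (pf X p (x l)) L <= rpow sigma p).
    { eapply Rle_trans; [apply lpS_ge; auto|]. auto. }
    assert (lsum (chi F) L <= n) by (apply chi_count; auto).
    assert (0 <= Q) by apply rpow_nonneg.
    assert (0 <= E) by (unfold E; assert (0 <= Cp * K) by (apply Rmult_le_pos; auto); nra).
    assert (K * lsum (fun i => (1 - chi F i) * pf Y p y i) L <= K * dl) by (apply Rmult_le_compat_l; auto).
    assert (Q * lsum (pf X p (x l)) L <= Q * rpow sigma p) by (apply Rmult_le_compat_l; auto).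
    assert (E * lsum (chi F) L <= E * n) by (apply Rmult_le_compat_l; auto).
    lra. }
  assert (K * dl <= e0 / 3).
  { unfold dl. unfold Rdiv. rewrite Rinv_mult.
    apply Rmult_le_reg_r with (K + 1); [lra|].
    replace (K * (e0 * (/ 3 * / (K + 1))) * (K + 1)) with (K * e0 / 3) by (field; lra).
    unfold Rdiv; nra. }
  lra.
Qed.

Theorem proposition5p1 :
  forall (I : Type) (X Y : I -> NormedSpace) (A : forall i, LinOp (X i) (Y i)),
    inhabited I ->
    forall (HK : exists K, forall i (x : X i), pn_norm (A i x) <= K * pn_norm x),
      (forall (p : R) (hp : 1 < p) (M : R),
          (forall i, tp_le p (A i) M /\ opnorm_le (A i) M) ->
          tp_le p (lp_op hp A HK) M)
      /\
      (forall M : R,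
          (forall i, tinf_le (A i) M /\ opnorm_le (A i) M) ->
          tinf_le (c0_op A HK) M).
Proof.
  intros I X Y A Hinh HK. split.
  - intros p hp M H. apply lp_main; auto.
  - intros M H. apply c0_main; auto.
Qed.
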